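(* Let $f\ge 1$ and $k\ge 2$ be integers, let there be $n=kf+1$ validators, each maintaining a local DAG as described in the context (DAG-Rider setting). Let $p_i$ be a correct validator that completes wave $w$, i.e. $DAG_i[\mathit{round}(w,4)]$ contains at least $(k-1)f+1$ vertices. Then there exist $V\subseteq DAG_i[\mathit{round}(w,1)]$ and $U\subseteq DAG_i[\mathit{round}(w,4)]$ with $|V|\ge (k-1)f+1$ and $|U|\ge (k-1)f+1$ such that for every $v\in V$ and every $u\in U$ there is a path from $u$ to $v$.
   Context: Setting: $n=kf+1$ validators $p_1,\dots,p_n$, of which at most $f$ are Byzantine and the rest are correct (honest). All validators' local DAGs are subsets of one common set of vertices. Each vertex has a round number $r\ge 1$ and a source validator; for each validator and each round there is at most one vertex (no equivocation), so any two local DAGs that contain the vertex of a given validator for a given round contain the identical vertex, with identical edges. Every vertex of round $r\ge 2$ has edges to exactly $(k-1)f+1$ vertices of round $r-1$, all with distinct sources. Each validator $p_i$ has a local DAG $DAG_i$, a set of vertices closed under edges (if $u\in DAG_i$ then every vertex $u$ has an edge to is in $DAG_i$). $DAG_i[r]$ denotes the set of round-$r$ vertices of $DAG_i$. $\mathit{path}(u,v)$ (''a path from $u$ to $v$'') means there is a sequence of contiguous edges leading from $u$ to $v$. Rounds are grouped into waves of 4 rounds: $\mathit{round}(w,j)=4(w-1)+j$ for $j=1,2,3,4$ and waves $w\ge 1$. A validator completes wave $w$ once its local DAG contains at least $(k-1)f+1$ vertices of $\mathit{round}(w,4)$. *)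

(* Defs.v *)
From mathcomp Require Import all_boot.
Set Implicit Arguments. Unset Strict Implicit. Unset Printing Implicit Defensive.

(* A vertex is identified by (round, source); by non-equivocation there is at
   most one vertex per (round, source), so this pair identifies it uniquely. *)
Definition vertex (n : nat) : Type := (nat * 'I_n)%type.

Definition round (w j : nat) : nat := 4 * (w - 1) + j.

Inductive dag_path {T : Type} (edge : T -> T -> bool) : T -> T -> Prop :=
| path_edge u v : edge u v -> dag_path edge u v
| path_cons u w v : edge u w -> dag_path edge w v -> dag_path edge u v.

Definition layer (n : nat) (D : pred (vertex n)) (r : nat) : {set 'I_n} :=
  [set j | D (r, j)].

(* Main.v *)
Require Import Defs.
From mathcomp Require Import all_boot.

From mathcomp Require Import zify.
Lemma card_sum_bool (T: finType) (A: {pred T}) (P: pred T):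
  #|[set x in A | P x]| = \sum_(x in A) (P x : nat).
Proof.
rewrite -sum1_card (eq_bigl (fun x => (x \in A) && P x)); last by move=> x; rewrite inE.
by rewrite big_mkcondr; apply: eq_bigr => x _; case: (P x).
Qed.
Lemma card_sum_bool' (T: finType) (P: pred T):
  #|[set x | P x]| = \sum_x (P x : nat).
Proof.
rewrite -sum1_card (eq_bigl (fun x => P x)); last by move=> x; rewrite inE.
by rewrite big_mkcond; apply: eq_bigr => x _; case: (P x).
Qed.

Theorem lemma2
  (f k : nat) (hf : 1 <= f) (hk : 2 <= k)
  (* common set of vertices and the edges of those vertices *)
  (G : pred (vertex (k * f + 1)))
  (edge : vertex (k * f + 1) -> vertex (k * f + 1) -> bool)
  (* Byzantine validators: at most f *)
  (byz : {set 'I_(k * f + 1)}) (hbyz : #|byz| <= f)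
  (* local DAGs *)
  (DAG : 'I_(k * f + 1) -> pred (vertex (k * f + 1)))
  (hround : forall v, G v -> 1 <= v.1)
  (hedgeG : forall u v, edge u v -> G u /\ G v)
  (hstrong : forall r j, 2 <= r -> G (r, j) ->
      #|[set j' | edge (r, j) (r.-1, j')]| = (k - 1) * f + 1)
  (hsub : forall i v, DAG i v -> G v)
  (hclosed : forall i u v, DAG i u -> edge u v -> DAG i v)
  (i : 'I_(k * f + 1)) (hi : i \notin byz)
  (w : nat) (hw : 1 <= w)
  (hcomplete : (k - 1) * f + 1 <= #|layer (DAG i) (round w 4)|) :
  exists (V U : {set 'I_(k * f + 1)}),
    [/\ V \subset layer (DAG i) (round w 1),
        U \subset layer (DAG i) (round w 4),
        (k - 1) * f + 1 <= #|V|,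
        (k - 1) * f + 1 <= #|U| &
        forall v u, v \in V -> u \in U ->
          dag_path edge (round w 4, u) (round w 1, v)].
Proof.
set N := k * f + 1. set q := (k - 1) * f + 1.
set r1 := round w 1. set r2 := round w 2. set r3 := round w 3. set r4 := round w 4.
have e43 : r4.-1 = r3 by rewrite /r4 /r3 /round; lia.
have e32 : r3.-1 = r2 by rewrite /r3 /r2 /round; lia.
have e21 : r2.-1 = r1 by rewrite /r2 /r1 /round; lia.
set L3 := layer (DAG i) r3. set L4 := layer (DAG i) r4.
set par := fun r (j : 'I_N) => [set j' | edge (r, j) (r.-1, j')].
have parq : forall r j, 2 <= r -> DAG i (r, j) -> #|par r j| = q.
  by move=> r j hr hd; apply: hstrong => //; apply: hsub hd.
have parsub : forall r j, DAG i (r, j) -> par r j \subset layer (DAG i) r.-1.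
  move=> r j hd; apply/subsetP => y; rewrite !inE => he; exact: hclosed hd he.
have qN : q <= N by rewrite /q /N; nia.
have l3N : #|L3| <= N by rewrite -[N]card_ord max_card.
have [u0 u0L4] : exists u0, u0 \in L4.
  apply/set0Pn; rewrite -card_gt0; apply: leq_trans hcomplete; by rewrite addn1.
have u0D : DAG i (r4, u0) by move: u0L4; rewrite inE.
have ql3 : q <= #|L3|.
  rewrite -(parq r4 u0) //; last by rewrite /r4 /round; lia.
  by apply: subset_leq_card; rewrite /L3 -e43; apply: parsub.
set good := fun y : 'I_N => [forall u in L4, exists x in L3,
   edge (r4, u) (r3, x) && edge (r3, x) (r2, y)].
have [y gy] : exists y, good y.
  case: (boolP [exists y, good y]) => [/existsP //|/existsPn bad]; exfalso.
  set Ch := fun y : 'I_N => [set x in L3 | edge (r3, x) (r2, y)].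
  have chle : forall y, #|Ch y| <= #|L3| - q.
    move=> y; have := bad y; rewrite negb_forall_in => /exists_inP [u uL4].
    rewrite negb_exists_in => /forall_inP nx.
    have uD : DAG i (r4, u) by move: uL4; rewrite inE.
    have sub : Ch y \subset L3 :\: par r4 u.
      apply/subsetP => x; rewrite inE => /andP [xL3 ex].
      rewrite in_setD xL3 andbT /par inE e43; apply/negP => eu.
      by have := nx x xL3; rewrite eu ex.
    rewrite -(parq r4 u) //; last by rewrite /r4 /round; lia.
    rewrite -cardsDS; last by rewrite /L3 -e43; apply: parsub.
    exact: subset_leq_card.
  have tot : \sum_y #|Ch y| = #|L3| * q.
    rewrite (eq_bigr (fun y => \sum_(x in L3) (edge (r3, x) (r2, y) : nat)));
      last by move=> y _; rewrite /Ch card_sum_bool.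
    rewrite exchange_big /=.
    rewrite (eq_bigr (fun _ => q)); first by rewrite sum_nat_const mulnC.
    move=> x xL3; rewrite -(parq r3 x); last by move: xL3; rewrite inE.
      by rewrite /par card_sum_bool' e32.
    by rewrite /r3 /round; lia.
  have : \sum_(y : 'I_N) #|Ch y| <= \sum_(y : 'I_N) (#|L3| - q) by apply: leq_sum.
  rewrite tot sum_nat_const card_ord.
  move: ql3 l3N; rewrite /q /N => h1 h2 h3.
  have h4 : (k * f + 1) * ((k - 1) * f + 1) <= #|L3| * f by nia.
  nia.
move/forall_inP: gy => gy.
have [x0 /andP [x0L3 ex0]] : exists x, (x \in L3) && edge (r3, x) (r2, y).
  have /exists_inP [x xL3 /andP [_ e]] := gy u0 u0L4; exists x; by rewrite xL3.
have yD : DAG i (r2, y).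
  by apply: hclosed ex0; move: x0L3; rewrite inE.
exists (par r2 y), L4; split => //.
- by have := parsub _ _ yD; rewrite e21.
- rewrite parq //; by rewrite /r2 /round; lia.
move=> v u vP uL4; have /exists_inP [x xL3 /andP [e1 e2]] := gy u uL4.
apply: path_cons e1 _; apply: path_cons e2 _; apply: path_edge.
by move: vP; rewrite inE e21.
Qed.
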